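(* Let $X$ be a set, let $T:\mathcal P(X)\to\mathcal P(X)$ be an order reversing quasi involution, and let $R:\mathcal P(X)\to\mathcal P(X)$ be a complemented order reversing quasi involution. Then the composition $T\circ R\circ T$ is an order reversing quasi involution, and the composition $R\circ T\circ R$ is a complemented order reversing quasi involution.
   Context: $\mathcal P(X)$ denotes the power set of $X$. A map $T:\mathcal P(X)\to\mathcal P(X)$ is an order reversing quasi involution if for all $K,L\subseteq X$: $K\subseteq TTK$, and $L\subseteq K$ implies $TK\subseteq TL$. A map $R:\mathcal P(X)\to\mathcal P(X)$ is a complemented order reversing quasi involution if for all $K,L\subseteq X$: $RRK\subseteq K$, and $L\subseteq K$ implies $RK\subseteq RL$. *)

(* Defs.v *)
Definition subset {X : Type} (K L : X -> Prop) : Prop := forall x, K x -> L x.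

Definition orqi {X : Type} (T : (X -> Prop) -> (X -> Prop)) : Prop :=
  (forall K, subset K (T (T K))) /\
  (forall K L, subset L K -> subset (T K) (T L)).

Definition corqi {X : Type} (R : (X -> Prop) -> (X -> Prop)) : Prop :=
  (forall K, subset (R (R K)) K) /\
  (forall K L, subset L K -> subset (R K) (R L)).

(* Main.v *)
Require Import Defs.

Theorem lemma8p12 (X : Type) (T R : (X -> Prop) -> (X -> Prop)) :
  orqi T -> corqi R ->
  orqi (fun K => T (R (T K))) /\ corqi (fun K => R (T (R K))).
Proof.
  intros [T1 T2] [R1 R2]. unfold subset in *.
  split; split.
  - intros K x Hx.
    assert (H : forall y, R (T (T (R (T K)))) y -> T K y).
    { intros y Hy. apply R1. apply (R2 _ _ (T1 (R (T K)))). exact Hy. }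
    apply (T2 _ _ H). apply T1. exact Hx.
  - intros K L H. unfold subset in *. apply T2. apply R2. apply T2. exact H.
  - intros K x Hx.
    assert (H : forall y, R K y -> T (R (R (T (R K)))) y).
    { intros y Hy. apply (T2 _ _ (R1 (T (R K)))). apply T1. exact Hy. }
    apply R1. apply (R2 _ _ H). exact Hx.
  - intros K L H. unfold subset in *. apply R2. apply T2. apply R2. exact H.
Qed.
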